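(* Let $p\in(1,2)$ and let $u$ be an ancient solution of the half-space problem $u_t-\Delta u=|\nabla u|^p$ in $\mathbb{R}^n_+\times(-\infty,0)$, $u=0$ on $\partial\mathbb{R}^n_+\times(-\infty,0)$. Assume that for each $\varepsilon>0$, $$\inf_{\Gamma_R\times(-\infty,-\varepsilon]}u=o(R)\quad\text{as }R\to\infty.$$ Then $u\ge0$.
   Context: $\mathbb{R}^n_+:=\{x\in\mathbb{R}^n: x_n>0\}$, $\Gamma_R:=\{x\in\mathbb{R}^n: 0<x_n<R\}$. An ancient solution of the half-space problem is a function $u\in C^{2,1}(Q)\cap C(\overline Q)$, $Q=\mathbb{R}^n_+\times(-\infty,0)$, satisfying the PDE pointwise in $Q$ and $u=0$ pointwise on $\partial\mathbb{R}^n_+\times(-\infty,0)$. *)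

(* Defs.v *)
From mathcomp Require Import all_boot.
From Stdlib Require Import Reals.
From Coquelicot Require Import Coquelicot.
Open Scope R_scope.

(* the last coordinate x_n (0 in the degenerate case n = 0) *)
Definition lastc {n : nat} (x : 'I_n -> R) : R :=
  match n as m return ('I_m -> R) -> R with
  | 0 => fun _ => 0
  | m.+1 => fun y => y ord_max
  end x.

Definition shift {n : nat} (x : 'I_n -> R) (i : 'I_n) (s : R) : 'I_n -> R :=
  fun j => if j == i then x j + s else x j.

Definition pd {n : nat} (i : 'I_n) (f : ('I_n -> R) -> R -> R)
  : ('I_n -> R) -> R -> R :=
  fun x t => Derive (fun s => f (shift x i s) t) 0.
Definition has_pd {n : nat} (i : 'I_n) (f : ('I_n -> R) -> R -> R)
  (x : 'I_n -> R) (t : R) : Prop :=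
  ex_derive (fun s => f (shift x i s) t) 0.
Definition dt {n : nat} (f : ('I_n -> R) -> R -> R) : ('I_n -> R) -> R -> R :=
  fun x t => Derive (fun s => f x s) t.

Definition gradnorm {n : nat} (f : ('I_n -> R) -> R -> R) (x : 'I_n -> R) (t : R) : R :=
  sqrt (\big[Rplus/0]_(i < n) (pd i f x t) ^ 2).
Definition lap {n : nat} (f : ('I_n -> R) -> R -> R) (x : 'I_n -> R) (t : R) : R :=
  \big[Rplus/0]_(i < n) pd i (pd i f) x t.

Definition rpow (a p : R) : R := if Rlt_dec 0 a then Rpower a p else 0.

Definition inQ {n : nat} (x : 'I_n -> R) (t : R) : Prop := 0 < lastc x /\ t < 0.
Definition inQbar {n : nat} (x : 'I_n -> R) (t : R) : Prop := 0 <= lastc x /\ t <= 0.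

Definition cont_within {n : nat} (D : ('I_n -> R) -> R -> Prop)
  (f : ('I_n -> R) -> R -> R) (x : 'I_n -> R) (t : R) : Prop :=
  forall eps, 0 < eps -> exists delta, 0 < delta /\
    forall y s, D y s -> (forall i, Rabs (y i - x i) < delta) ->
      Rabs (s - t) < delta -> Rabs (f y s - f x t) < eps.

Definition C21 {n : nat} (f : ('I_n -> R) -> R -> R) : Prop :=
  forall x t, inQ x t ->
    cont_within inQ f x t /\
    (forall i, has_pd i f x t /\ cont_within inQ (pd i f) x t) /\
    (forall i j, has_pd j (pd i f) x t /\ cont_within inQ (pd j (pd i f)) x t) /\
    ex_derive (fun s => f x s) t /\ cont_within inQ (dt f) x t.

Definition ancient_solution {n : nat} (p : R) (u : ('I_n -> R) -> R -> R) : Prop :=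
  C21 u /\
  (forall x t, inQbar x t -> cont_within inQbar u x t) /\
  (forall x t, inQ x t -> dt u x t - lap u x t = rpow (gradnorm u x t) p) /\
  (forall x t, lastc x = 0 -> t < 0 -> u x t = 0).

(* Main.v *)
Require Import Defs.
From mathcomp Require Import all_boot.
From Stdlib Require Import Reals.
From Coquelicot Require Import Coquelicot.
From Stdlib Require Import Lra Classical FunctionalExtensionality.
From mathcomp Require all_order all_algebra all_classical all_reals all_analysis Rstruct Rstruct_topology.
Open Scope R_scope.

Definition inBox {n : nat} (a b : 'I_n -> R) (T1 T2 : R) (x : 'I_n -> R) (t : R) : Prop :=
  (forall i, Rle (a i) (x i) /\ Rle (x i) (b i)) /\ Rle T1 t /\ Rle t T2.

Module EVTm.
Import all_order all_algebra all_classical all_reals all_analysis Rstruct Rstruct_topology.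
Import numFieldNormedType.Exports.
Import Order.TTheory GRing.Theory Num.Theory.
Local Open Scope ring_scope.
Local Open Scope classical_set_scope.

Section S.
Variables (n : nat) (a b : 'I_n -> R) (T1 T2 : R).

Definition dx (v : 'rV[R]_(n + 1)) : 'I_n -> R := fun i => v ord0 (lshift 1 i).
Definition dtt (v : 'rV[R]_(n + 1)) : R := v ord0 (rshift n ord0).
Definition enc (x : 'I_n -> R) (t : R) : 'rV[R]_(n + 1) :=
  \row_j (match fintype.split j with inl i => x i | inr _ => t end).
Definition Iv (j : 'I_(n + 1)) : set R :=
  match fintype.split j with inl i => `[a i, b i] | inr _ => `[T1, T2] end.

Lemma dx_enc x t : dx (enc x t) = x.
Proof. apply: funext => i; rewrite /dx /enc mxE. by rewrite (unsplitK (inl i)). Qed.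
Lemma dt_enc x t : dtt (enc x t) = t.
Proof. rewrite /dtt /enc mxE. by rewrite (unsplitK (inr ord0)). Qed.

Lemma A_eq : [set v : 'rV[R]_(n+1) | inBox a b T1 T2 (dx v) (dtt v)] =
   [set v | forall j, Iv j (v ord0 j)].
Proof.
apply/seteqP; split => v /=.
- move=> [Hx [H1 H2]] j; rewrite /Iv.
  have := splitK j; case: (fintype.split j) => [i|k] /= <-.
  + have [h1 h2] := Hx i. rewrite /= in_itv /=. apply/andP; split; apply/RleP; done.
  + have -> : k = ord0 by apply: ord_inj; case: k => [[]].
    rewrite /= in_itv /=. apply/andP; split; apply/RleP; done.
- move=> H; split; [move=> i | ]; rewrite /dx /dtt.
  + move: (H (lshift 1 i)); rewrite /Iv (unsplitK (inl i)) /= in_itv /=.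
    by move=> /andP [/RleP ? /RleP ?].
  + move: (H (rshift n ord0)); rewrite /Iv (unsplitK (inr ord0)) /= in_itv /=.
    by move=> /andP [/RleP ? /RleP ?].
Qed.

Lemma evt_box (F : ('I_n -> R) -> R -> R) :
  (forall i, Rle (a i) (b i)) -> Rle T1 T2 ->
  (forall x t, inBox a b T1 T2 x t -> cont_within (inBox a b T1 T2) F x t) ->
  exists x t, inBox a b T1 T2 x t /\
    forall y s, inBox a b T1 T2 y s -> Rle (F x t) (F y s).
Proof.
move=> hab hT hc.
pose A := [set v : 'rV[R]_(n+1) | inBox a b T1 T2 (dx v) (dtt v)].
pose G := fun v : 'rV[R]_(n+1) => F (dx v) (dtt v).
have A0 : A !=set0.
  exists (enc a T1); rewrite /A /= dx_enc dt_enc; split; last by split; [apply: Rle_refl|].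
  by move=> i; split; [apply: Rle_refl | apply: hab].
have cA : compact A.
  rewrite /A A_eq; apply: rV_compact => j; rewrite /Iv.
  by destruct (fintype.split j); apply: segment_compact.
have cG : {within A, continuous G}.
  apply/subspace_continuousP => v Av.
  rewrite /from_subspace /=. apply/(@cvgrPdist_lt _ R^o) => e /RltP e0.
  have [d [/RltP d0 Hd]] := hc _ _ Av e e0.
  rewrite near_withinE; near=> w => Aw.
  have Hb : forall j, `|v ord0 j - w ord0 j| < d.
    near: w. apply/nbhs_ballP; exists d => //= w [_ Bw] j.
    move: (Bw ord0 j). by rewrite /pseudometric_structure.ball /=.
  apply/RltP; rewrite /G.
  have H := Hd (dx w) (dtt w) Aw.
  refine (Rle_lt_trans _ _ _ (Req_le _ _ (Rabs_minus_sym _ _)) (H _ _)).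
  - move=> i; refine (Rle_lt_trans _ _ _ (Req_le _ _ (Rabs_minus_sym _ _)) _); apply/RltP; exact: Hb.
  - refine (Rle_lt_trans _ _ _ (Req_le _ _ (Rabs_minus_sym _ _)) _); apply/RltP; exact: Hb.
have [c Ac minc] := compact_EVT_min A0 cA cG.
exists (dx c), (dtt c); split; first by move: Ac; rewrite inE.
move=> y s Hys. apply/RleP.
have := minc (enc y s). rewrite /G dx_enc dt_enc. apply. rewrite inE /A /= dx_enc dt_enc //.
Unshelve. all: end_near.
Qed.
End S.
End EVTm.

Import Rstruct.
Open Scope R_scope.

Lemma H1 (f : R -> R) x l a c d :
  is_derive f x l -> 0 < d ->
  (forall r, 0 < r < d -> r * (a + c * r) <= f (x + r) - f x) -> a <= l.
Proof.
intros Hd Hdp Hm.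
destruct (Rle_or_lt a l) as [|Hlt]; [assumption|exfalso].
apply is_derive_Reals in Hd.
set (eps := (a - l) / 2).
assert (Heps : 0 < eps) by (unfold eps; lra).
destruct (Hd eps Heps) as [d1 Hd1].
pose proof (cond_pos d1) as Hd1p.
pose proof (Rabs_pos c) as Hc0.
set (r := Rmin (Rmin d d1) (eps / (Rabs c + 1)) / 2).
assert (Hm1 : Rmin (Rmin d d1) (eps / (Rabs c + 1)) <= Rmin d d1) by apply Rmin_l.
assert (Hm2 : Rmin (Rmin d d1) (eps / (Rabs c + 1)) <= eps / (Rabs c + 1)) by apply Rmin_r.
assert (Hm3 : Rmin d d1 <= d) by apply Rmin_l.
assert (Hm4 : Rmin d d1 <= d1) by apply Rmin_r.
assert (Hpos : 0 < Rmin (Rmin d d1) (eps / (Rabs c + 1))).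
{ apply Rmin_pos; [apply Rmin_pos; lra|]. apply Rdiv_lt_0_compat; lra. }
assert (Hr : 0 < r) by (unfold r; lra).
assert (Hrc : r * (Rabs c + 1) < eps).
{ assert (r <= eps / (Rabs c + 1) / 2) by (unfold r; lra).
  assert (eps / (Rabs c + 1) / 2 * (Rabs c + 1) = eps / 2) by (field; lra).
  nra. }
assert (Hq := Hd1 r (Rgt_not_eq _ _ Hr) ltac:(rewrite Rabs_pos_eq; unfold r; lra)).
assert (Hmr := Hm r ltac:(unfold r; lra)).
set (q := (f (x + r) - f x) / r) in *.
assert (Hqr : f (x + r) - f x = q * r) by (unfold q; field; lra).
rewrite Hqr in Hmr.
assert (a + c * r <= q) by nra.
pose proof (Rle_abs (- c)) as Hc. rewrite Rabs_Ropp in Hc.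
assert (c * r >= - Rabs c * r) by nra.
apply Rabs_def2 in Hq. unfold eps in *. nra.
Qed.

Lemma H1L (f : R -> R) x l a c d :
  is_derive f x l -> 0 < d ->
  (forall r, 0 < r < d -> r * (a + c * r) <= f (x - r) - f x) -> a <= - l.
Proof.
intros Hd Hdp Hm.
apply (H1 (fun z => f (- z)) (- x) (- l) a c d); auto.
- replace (- l) with (scal (-1) l) by (rewrite /scal /= /mult /=; ring).
  apply (is_derive_comp f (fun z => - z)).
  + rewrite Ropp_involutive. exact Hd.
  + auto_derive; auto.
- intros r Hr.
  assert (E1 : (- (- x + r) : R) = x - r) by ring.
  assert (E2 : (- - x : R) = x) by ring.
  rewrite E1 E2. auto.
Qed.

Lemma lem1D (U : R -> R) a c d :
  0 < d -> (forall r, Rabs r < d -> ex_derive U r) -> ex_derive (Derive U) 0 ->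
  (forall r, Rabs r < d -> U 0 <= U r - a * r - c * r ^ 2) ->
  Derive U 0 = a /\ 2 * c <= Derive (Derive U) 0.
Proof.
intros Hd Hex Hex2 Hm.
assert (D0 : is_derive U 0 (Derive U 0)) by (apply Derive_correct; apply Hex; rewrite Rabs_R0; lra).
assert (Ha : Derive U 0 = a).
{ assert (A1 : a <= Derive U 0).
  { apply (H1 U 0 _ a c d D0 Hd). intros r Hr.
    assert (E : (0 + r : R) = r) by ring. rewrite E.
    assert (Hr' : Rabs r < d) by (rewrite Rabs_pos_eq; lra).
    specialize (Hm r Hr'). nra. }
  assert (A2 : - a <= - Derive U 0).
  { apply (H1L U 0 _ (-a) c d D0 Hd). intros r Hr.
    assert (E : (0 - r : R) = - r) by ring. rewrite E.
    assert (Hr' : Rabs (- r) < d) by (rewrite Rabs_Ropp Rabs_pos_eq; lra).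
    specialize (Hm (- r) Hr'). nra. }
  lra. }
split; [exact Ha|].
set (dd := Derive (Derive U) 0).
destruct (Rle_or_lt (2 * c) dd) as [|Hlt]; [assumption|exfalso].
assert (D1 : derivable_pt_lim (Derive U) 0 dd).
{ apply is_derive_Reals. apply Derive_correct. exact Hex2. }
set (eps := (2 * c - dd) / 2).
assert (Heps : 0 < eps) by (unfold eps; lra).
destruct (D1 eps Heps) as [d1 Hd1].
pose proof (cond_pos d1) as Hd1p.
set (g := fun z => Derive U z - a - 2 * c * z).
assert (Hneg : forall z, 0 < z < Rmin d d1 -> g z < 0).
{ intros z Hz.
  assert (Hm1 : Rmin d d1 <= d1) by apply Rmin_r.
  assert (Hq := Hd1 z (Rgt_not_eq _ _ (proj1 Hz)) ltac:(rewrite Rabs_pos_eq; lra)).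
  rewrite Rplus_0_l Ha in Hq.
  apply Rabs_def2 in Hq.
  set (q := (Derive U z - a) / z) in *.
  assert (Hqr : Derive U z - a = q * z) by (unfold q; field; lra).
  unfold g. unfold eps in Hq. nra. }
set (h := fun z => U z - a * z - c * z ^ 2).
assert (Hh : forall z, Rabs z < d -> is_derive h z (g z)).
{ intros z Hz. unfold h, g. auto_derive.
  - apply Hex; exact Hz.
  - change (Derive [eta U] z) with (Derive U z). ring. }
assert (Hcont : forall z, Rabs z < d -> continuity_pt h z).
{ intros z Hz. apply (derivable_continuous_pt h z). exists (g z).
  apply is_derive_Reals, Hh, Hz. }
assert (Hm1 : Rmin d d1 <= d) by apply Rmin_l.
assert (Hmp : 0 < Rmin d d1) by (apply Rmin_pos; lra).
set (r0 := Rmin d d1 / 2).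
assert (Hr0 : 0 < r0) by (unfold r0; lra).
assert (Hr0d : r0 < Rmin d d1) by (unfold r0; lra).
destruct (MVT_gen h (r0 / 2) r0 g) as [x1 [Hx1 E1]].
{ rewrite Rmin_left; [|lra]. rewrite Rmax_right; [|lra].
  intros z Hz. apply Hh. rewrite Rabs_pos_eq; lra. }
{ rewrite Rmin_left; [|lra]. rewrite Rmax_right; [|lra].
  intros z Hz. apply Hcont. rewrite Rabs_pos_eq; lra. }
rewrite Rmin_left in Hx1; [|lra]. rewrite Rmax_right in Hx1; [|lra].
destruct (MVT_gen h 0 (r0 / 2) g) as [x2 [Hx2 E2]].
{ rewrite Rmin_left; [|lra]. rewrite Rmax_right; [|lra].
  intros z Hz. apply Hh. rewrite Rabs_pos_eq; lra. }
{ rewrite Rmin_left; [|lra]. rewrite Rmax_right; [|lra].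
  intros z Hz. apply Hcont. rewrite Rabs_pos_eq; lra. }
rewrite Rmin_left in Hx2; [|lra]. rewrite Rmax_right in Hx2; [|lra].
assert (G1 : g x1 < 0) by (apply Hneg; lra).
assert (G2 : g x2 <= 0).
{ destruct (Req_dec x2 0) as [->|Hne].
  - unfold g. rewrite Ha. lra.
  - left. apply Hneg. lra. }
assert (Hmr := Hm r0 ltac:(rewrite Rabs_pos_eq; lra)).
unfold h in E1, E2. simpl in E1, E2, Hmr. nra.
Qed.


Lemma shift_shift {n} (y : 'I_n -> R) i r q : shift (shift y i r) i q = shift y i (r + q).
Proof. apply functional_extensionality => j. rewrite /shift. case: (j == i) => //. ring. Qed.

Lemma shift0 {n} (y : 'I_n -> R) i : shift y i 0 = y.
Proof. apply functional_extensionality => j. rewrite /shift. case: (j == i) => //. ring. Qed.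

Lemma is_derive_shift (f : R -> R) r :
  ex_derive (fun q => f (r + q)) 0 -> is_derive f r (Derive (fun q => f (r + q)) 0).
Proof.
intros H. apply Derive_correct in H.
set (l := Derive (fun q => f (r + q)) 0) in *.
assert (H2 := is_derive_comp (fun q => f (r + q)) (fun z => z - r) r l 1).
assert (E : (r - r : R) = 0) by ring.
simpl in H2. rewrite E in H2.
assert (H3 : is_derive (fun z : R => f (r + (z - r))) r (scal 1 l)).
{ apply H2; [exact H|]. auto_derive; auto. }
rewrite scal_one in H3.
eapply is_derive_ext; [|exact H3]. intros z. simpl. f_equal. ring.
Qed.

Section CW.
Variable n : nat.
Variable D : ('I_n -> R) -> R -> Prop.

Lemma cw_ext (f g : ('I_n -> R) -> R -> R) x t :
  (forall y s, f y s = g y s) -> cont_within D f x t -> cont_within D g x t.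
Proof.
intros E H eps Heps. destruct (H eps Heps) as [d [Hd Hd2]]. exists d; split; auto.
intros y s Hy H1 H2. rewrite -!E. auto.
Qed.

Lemma cw_const c x t : cont_within D (fun _ _ => c) x t.
Proof. intros eps Heps. exists 1; split; [lra|]. intros. rewrite Rminus_diag Rabs_R0. lra. Qed.

Lemma cw_plus f g x t : cont_within D f x t -> cont_within D g x t ->
  cont_within D (fun y s => f y s + g y s) x t.
Proof.
intros Hf Hg eps Heps.
destruct (Hf (eps/2) ltac:(lra)) as [d1 [Hd1 H1]].
destruct (Hg (eps/2) ltac:(lra)) as [d2 [Hd2 H2]].
exists (Rmin d1 d2); split; [apply Rmin_pos; lra|].
intros y s Hy Hyx Hs.
assert (m1 := Rmin_l d1 d2). assert (m2 := Rmin_r d1 d2).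
assert (A1 := H1 y s Hy ltac:(intros i; specialize (Hyx i); lra) ltac:(lra)).
assert (A2 := H2 y s Hy ltac:(intros i; specialize (Hyx i); lra) ltac:(lra)).
replace (f y s + g y s - (f x t + g x t)) with ((f y s - f x t) + (g y s - g x t)) by ring.
eapply Rle_lt_trans; [apply Rabs_triang|]. lra.
Qed.

Lemma cw_scal c f x t : cont_within D f x t -> cont_within D (fun y s => c * f y s) x t.
Proof.
intros Hf eps Heps.
destruct (Hf (eps / (Rabs c + 1))) as [d [Hd H1]].
{ apply Rdiv_lt_0_compat; [lra|]. pose proof (Rabs_pos c); lra. }
exists d; split; auto. intros y s Hy Hyx Hs.
specialize (H1 y s Hy Hyx Hs).
replace (c * f y s - c * f x t) with (c * (f y s - f x t)) by ring.
rewrite Rabs_mult. pose proof (Rabs_pos c). pose proof (Rabs_pos (f y s - f x t)).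
assert (E : eps / (Rabs c + 1) * (Rabs c + 1) = eps) by (field; lra).
nra.
Qed.

Lemma cw_coord i x t : cont_within D (fun y _ => y i) x t.
Proof. intros eps Heps. exists eps; split; auto. Qed.

Lemma cw_time x t : cont_within D (fun _ s => s) x t.
Proof. intros eps Heps. exists eps; split; auto. Qed.

Lemma cw_comp (g : R -> R) f x t : cont_within D f x t -> continuity_pt g (f x t) ->
  cont_within D (fun y s => g (f y s)) x t.
Proof.
intros Hf Hg eps Heps.
destruct (Hg eps Heps) as [a [Ha Ha2]].
destruct (Hf a Ha) as [d [Hd H1]].
exists d; split; auto. intros y s Hy Hyx Hs.
specialize (H1 y s Hy Hyx Hs).
destruct (Req_dec (f y s) (f x t)) as [E|Ne].
- rewrite E Rminus_diag Rabs_R0. lra.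
- apply (Ha2 (f y s)). split; [split; [exact I|auto]|]. exact H1.
Qed.

Lemma cw_sum k (G : 'I_k -> ('I_n -> R) -> R -> R) x t :
  (forall j, cont_within D (G j) x t) ->
  cont_within D (fun y s => \big[Rplus/0]_(j < k) G j y s) x t.
Proof.
elim: k G => [|k IH] G HG.
- apply (cw_ext (fun _ _ => 0)); [intros; by rewrite big_ord0|apply cw_const].
- apply (cw_ext (fun y s => \big[Rplus/0]_(j < k) G (widen_ord (leqnSn k) j) y s + G ord_max y s)).
  + intros; by rewrite big_ord_recr.
  + apply cw_plus; [apply IH => j|]; apply HG.
Qed.

Lemma cw_sub (E : ('I_n -> R) -> R -> Prop) f x t :
  (forall y s, D y s -> E y s) -> cont_within E f x t -> cont_within D f x t.
Proof.
intros HDE Hf eps Heps. destruct (Hf eps Heps) as [d [Hd H1]]. exists d; split; auto.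
Qed.
End CW.

Lemma sum_le k (F G : 'I_k -> R) : (forall i, F i <= G i) ->
  \big[Rplus/0]_(i < k) F i <= \big[Rplus/0]_(i < k) G i.
Proof.
intros H. apply: (big_ind2 (fun a b => a <= b)); [lra| |]. 
- intros; lra.
- intros i _; apply H.
Qed.

Lemma sum_nonneg k (P : pred 'I_k) (F : 'I_k -> R) : (forall i, 0 <= F i) ->
  0 <= \big[Rplus/0]_(i < k | P i) F i.
Proof.
intros H. apply: (big_ind (fun a => 0 <= a)); [lra| |].
- intros; lra.
- intros i _; apply H.
Qed.

Lemma sum_const k c : \big[Rplus/0]_(i < k) c = INR k * c.
Proof.
elim: k => [|k IH]; first by rewrite big_ord0 /=; ring.
rewrite big_ord_recr IH S_INR /=. ring.
Qed.

Lemma sum_ge_one k (F : 'I_k -> R) i : (forall j, 0 <= F j) ->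
  F i <= \big[Rplus/0]_(j < k) F j.
Proof.
intros H. rewrite (bigD1 i) //=.
pose proof (sum_nonneg k (fun j => j != i) F H) as H0. apply Rle_trans with (F i + 0); [lra|]. apply Rplus_le_compat_l. exact H0.
Qed.

Definition phi m (ka B t0 : R) (x0 x : 'I_m.+1 -> R) (t : R) : R :=
  - ka * x ord_max - B * \big[Rplus/0]_(j < m.+1) (x j - x0 j) ^ 2 + B * (t - t0).

Lemma phi_shift m ka B t0 x0 (x : 'I_m.+1 -> R) t i r :
  phi m ka B t0 x0 (shift x i r) t =
  phi m ka B t0 x0 x t + (- ka * (if i == ord_max then 1 else 0) - 2 * B * (x i - x0 i)) * r
    + (- B) * r ^ 2.
Proof.
rewrite /phi.
have E1 : \big[Rplus/0]_(j < m.+1) (shift x i r j - x0 j) ^ 2 =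
          \big[Rplus/0]_(j < m.+1) (x j - x0 j) ^ 2 + (2 * (x i - x0 i) * r + r ^ 2).
{ rewrite (bigD1 i) //= [in RHS](bigD1 i) //=.
  rewrite (eq_bigr (fun j => (x j - x0 j) ^ 2)).
  - rewrite /shift eqxx /=. ring.
  - move=> j /negbTE Hj. by rewrite /shift Hj. }
rewrite E1.
have E2 : shift x i r ord_max = x ord_max + r * (if i == ord_max then 1 else 0).
{ rewrite /shift eq_sym. case: (i == ord_max); ring. }
rewrite E2. ring.
Qed.

Lemma phi_time m ka B t0 x0 (x : 'I_m.+1 -> R) t r :
  phi m ka B t0 x0 x (t - r) = phi m ka B t0 x0 x t - B * r.
Proof. rewrite /phi. ring. Qed.

Lemma phi_cont m ka B t0 x0 D x t : cont_within D (phi m ka B t0 x0) x t.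
Proof.
rewrite /phi.
apply cw_plus; [apply cw_plus|].
- apply cw_scal, cw_coord.
- apply (cw_ext _ _ (fun y s => - B * \big[Rplus/0]_(j < m.+1) (y j - x0 j) ^ 2)).
  + intros; ring.
  + apply cw_scal, cw_sum => j.
    apply (cw_comp _ _ (fun z => (z - x0 j) ^ 2) (fun y _ => y j)); [apply cw_coord|].
    reg.
- apply cw_scal. apply (cw_ext _ _ (fun y s => s + (- t0))); [intros; ring|].
  apply cw_plus; [apply cw_time|apply cw_const].
Qed.


Lemma main_bound m p (hp : 1 < p < 2) (u : ('I_m.+1 -> R) -> R -> R)
  (hu : ancient_solution p u)
  (hinf : forall eps, 0 < eps -> forall eta, 0 < eta ->
     exists R0, forall Rr, R0 <= Rr ->
       exists mm : R,
         is_glb_Rbar (fun y => exists (x : 'I_m.+1 -> R) (t : R),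
                         0 < lastc x < Rr /\ t <= - eps /\ y = u x t) (Finite mm)
         /\ Rabs mm <= eta * Rr)
  x0 t0 (hx : inQ x0 t0) ka (hk : 0 < ka) : - ka * x0 ord_max <= u x0 t0.
Proof.
destruct hu as [HC [Hcont [Hpde Hbd]]].
destruct hx as [hx0 ht0]. change (lastc x0) with (x0 ord_max) in hx0.
set xm := x0 ord_max in hx0 *.
destruct (hinf (- t0) ltac:(lra) (ka/2) ltac:(lra)) as [R0 HR0].
set R := Rmax 1 (Rmax (Rabs R0) xm).
have HR1 : 1 <= R := Rmax_l _ _.
have HR2 : Rabs R0 <= R.
{ apply Rle_trans with (Rmax (Rabs R0) xm); [apply Rmax_l|apply Rmax_r]. }
have HR3 : xm <= R.
{ apply Rle_trans with (Rmax (Rabs R0) xm); [apply Rmax_r|apply Rmax_r]. }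
destruct (HR0 (2 * R)) as [mm [Hglb Hmm]].
{ pose proof (Rle_abs R0). lra. }
have Hlow : forall y s, 0 < y ord_max < 2 * R -> s <= t0 -> - ka * R <= u y s.
{ intros y s Hy Hs. destruct Hglb as [Hlb _].
  have H := Hlb (Finite (u y s)) ltac:(exists y, s; split; [exact Hy|split; [lra|reflexivity]]).
  simpl in H. pose proof (Rle_abs (- mm)) as H1. rewrite Rabs_Ropp in H1. nra. }

set P := Rpower (ka / 2) p.
have HP : 0 < P by (unfold P, Rpower; apply exp_pos).
set N := INR m.+1.
have HN : 0 <= N by apply pos_INR.
set B := Rmin (ka / (4 * R)) (P / (2 * (2 * N + 1))).
have HB : 0 < B.
{ apply Rmin_pos; apply Rdiv_lt_0_compat; lra. }
have HB1 : B * (4 * R) <= ka.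
{ have : B <= ka / (4 * R) by apply Rmin_l.
  have E : ka / (4 * R) * (4 * R) = ka by (field; lra).
  intros; nra. }
have HB2 : B * (2 * (2 * N + 1)) <= P.
{ have : B <= P / (2 * (2 * N + 1)) by apply Rmin_r.
  have E : P / (2 * (2 * N + 1)) * (2 * (2 * N + 1)) = P by (field; lra).
  intros; nra. }
set K := ka * R / B.
have HK : 0 <= K by (unfold K; apply Rle_mult_inv_pos; nra).
have HKB : B * K = ka * R by (unfold K; field; lra).
set L := K + 1.
set T1 := t0 - K - 1.
have HLd : L = K + 1 := erefl.
have HT1d : T1 = t0 - K - 1 := erefl.
set a := fun j : 'I_m.+1 => if j == ord_max then 0 else x0 j - L.
set b := fun j : 'I_m.+1 => if j == ord_max then R else x0 j + L.
set F := fun x t => u x t - phi m ka B t0 x0 x t.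
have Hbox_Q : forall y s, inBox a b T1 t0 y s -> inQbar y s.
{ intros y s [Hyb [_ Hs]]. split; [|lra].
  destruct (Hyb ord_max) as [H _]. unfold a in H. rewrite eqxx in H. exact H. }
destruct (EVTm.evt_box (m.+1) a b T1 t0 F) as [y [s [Hy Hmin]]].
- intros j; unfold a, b; case: (j == ord_max); lra.
- lra.
- intros x t Hxt. unfold F.
  apply (cw_ext _ _ (fun y s => u y s + (-1) * phi m ka B t0 x0 y s)); [intros; ring|].
  apply cw_plus; [|apply cw_scal, phi_cont].
  apply (cw_sub _ _ inQbar); [exact Hbox_Q|]. apply Hcont. apply Hbox_Q; exact Hxt.
- have Hx0b : inBox a b T1 t0 x0 t0.
  { split; [|lra]. intros j; unfold a, b.
    case Hj: (j == ord_max).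
    + move/eqP: Hj => ->. fold xm. lra.
    + lra. }
  have Hphi0 : phi m ka B t0 x0 x0 t0 = - ka * xm.
  { rewrite /phi big1; [fold xm; ring|]. intros j _. ring. }
  suff Hkey : 0 <= F y s.
  { have := Hmin x0 t0 Hx0b. unfold F in Hkey |- *. rewrite Hphi0. lra. }

  destruct (Rle_or_lt 0 (F y s)) as [|HFneg]; [assumption|exfalso].
  unfold F in HFneg.
  destruct Hy as [Hyb [HT1s Hst0]].
  have Hymax : 0 <= y ord_max <= R.
  { destruct (Hyb ord_max) as [H1 H2]. unfold a, b in H1, H2. rewrite eqxx in H1 H2. lra. }
  have Hsum0 : 0 <= \big[Rplus/0]_(j < m.+1) (y j - x0 j) ^ 2.
  { apply: (sum_nonneg _ xpredT) => j. apply pow2_ge_0. }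
  have Hphi_def : phi m ka B t0 x0 y s =
     - ka * y ord_max - B * \big[Rplus/0]_(j < m.+1) (y j - x0 j) ^ 2 + B * (s - t0) := erefl.
  destruct (proj1 Hymax) as [Hy0|Hy0]; last first.
  { have Hu0 : u y s = 0 by (apply Hbd; [symmetry; exact Hy0|lra]).
    rewrite Hu0 Hphi_def -Hy0 in HFneg. nra. }
  have Hu := Hlow y s ltac:(lra) Hst0.
  have Hphi : - ka * R < phi m ka B t0 x0 y s.
  { destruct (Rle_or_lt (phi m ka B t0 x0 y s) (- ka * R)); [lra|assumption]. }
  rewrite Hphi_def in Hphi.
  have HyR : y ord_max < R.
  { destruct (Rle_or_lt R (y ord_max)) as [H|H]; [|exact H]. nra. }
  have HTs : T1 < s.
  { destruct (Rle_or_lt s T1) as [H|H]; [|exact H]. nra. }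
  have Hlat : forall j, j != ord_max -> Rabs (y j - x0 j) < L.
  { intros j Hj. destruct (Rle_or_lt L (Rabs (y j - x0 j))) as [H|H]; [|exact H].
    exfalso.
    have H1 : (y j - x0 j) ^ 2 <= \big[Rplus/0]_(j < m.+1) (y j - x0 j) ^ 2.
    { apply (sum_ge_one _ (fun j => (y j - x0 j) ^ 2)). intros; apply pow2_ge_0. }
    have H2 : L * L <= (y j - x0 j) ^ 2.
    { rewrite -(pow2_abs (y j - x0 j)). nra. }
    set S := \big[Rplus/0]_(j < m.+1) (y j - x0 j) ^ 2 in H1 Hphi.
    have H3 : L <= L * L by nra.
    have H4 : B * L <= B * S by (apply Rmult_le_compat_l; lra).
    rewrite HLd in H4. nra. }

  clear HFneg Hphi.
  have HyQ : inQ y s by (split; [exact Hy0|lra]).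
  have Hyb' : inBox a b T1 t0 y s by split; [exact Hyb|lra].
  set delta := fun i : 'I_m.+1 => if i == ord_max then Rmin (y ord_max) (R - y ord_max)
                                 else L - Rabs (y i - x0 i).
  have Hdelta : forall i, 0 < delta i.
  { intros i. unfold delta. case Hi: (i == ord_max).
    - apply Rmin_pos; lra.
    - have := Hlat i ltac:(by rewrite Hi). lra. }
  have Hsh : forall i r, Rabs r < delta i -> inBox a b T1 t0 (shift y i r) s /\ inQ (shift y i r) s.
  { intros i r Hr. unfold delta in Hr.
    have Hm1 := Rmin_l (y ord_max) (R - y ord_max).
    have Hm2 := Rmin_r (y ord_max) (R - y ord_max).
    have Hr2 := Rabs_def2 _ _ Hr.
    split; [split; [|lra]|split; [|lra]].
    - intros j. unfold shift, a, b.
      case Hji: (j == i).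
      + move/eqP: Hji => ->. case Hi: (i == ord_max).
        * rewrite Hi in Hr2. move/eqP: Hi => ->. lra.
        * rewrite Hi in Hr2 Hr. have Hab := Rabs_def2 _ _ (ltac:(
            apply Rle_lt_trans with (Rabs (y i - x0 i) + Rabs r);
            [replace (y i + r - x0 i) with ((y i - x0 i) + r) by ring; apply Rabs_triang|lra])
            : Rabs (y i + r - x0 i) < L). lra.
      + exact (Hyb j).
    - change (lastc (shift y i r)) with (shift y i r ord_max). unfold shift.
      case Hi: (ord_max == i).
      + move/eqP: Hi => Hi. subst i. rewrite eqxx in Hr2. lra.
      + exact Hy0. }

  destruct (HC y s HyQ) as [_ [_ [HC2 [HCt _]]]].
  have Hcoord : forall i, pd i u y s = - ka * (if i == ord_max then 1 else 0) - 2 * B * (y i - x0 i)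
                   /\ - 2 * B <= pd i (pd i u) y s.
  { intros i.
    set U := fun r => u (shift y i r) s.
    have HUr : forall r, Rabs r < delta i ->
       ex_derive (fun q => U (r + q)) 0 /\ pd i u (shift y i r) s = Derive U r.
    { intros r Hr. destruct (Hsh i r Hr) as [_ HQ].
      destruct (HC _ _ HQ) as [_ [Hpd _]]. destruct (Hpd i) as [Hh _].
      unfold has_pd in Hh.
      have E : (fun q => u (shift (shift y i r) i q) s) = (fun q => U (r + q)).
      { apply functional_extensionality => q. by rewrite shift_shift. }
      rewrite E in Hh. split; [exact Hh|].
      unfold pd. rewrite E. symmetry. apply is_derive_unique. apply is_derive_shift. exact Hh. }
    have HexU : forall r, Rabs r < delta i -> ex_derive U r.
    { intros r Hr. exists (Derive (fun q => U (r + q)) 0). apply is_derive_shift. apply HUr; exact Hr. }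
    have Hloc : locally 0 (fun r => pd i u (shift y i r) s = Derive U r).
    { exists (mkposreal _ (Hdelta i)). intros r Hr. apply HUr.
      move: Hr. rewrite /ball /= /AbsRing_ball /abs /minus /plus /opp /=. by rewrite Ropp_0 Rplus_0_r. }
    have Hex2 : ex_derive (Derive U) 0.
    { apply (ex_derive_ext_loc _ _ _ Hloc). exact (proj1 (HC2 i i)). }
    have Hm : forall r, Rabs r < delta i ->
      U 0 <= U r - (- ka * (if i == ord_max then 1 else 0) - 2 * B * (y i - x0 i)) * r - (- B) * r ^ 2.
    { intros r Hr. destruct (Hsh i r Hr) as [Hb _].
      have := Hmin _ _ Hb. unfold F. rewrite phi_shift. unfold U. rewrite shift0.
      intros; lra. }
    destruct (lem1D U _ (- B) (delta i) (Hdelta i) HexU Hex2 Hm) as [E1 E2].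
    split; [exact E1|].
    unfold pd at 1. rewrite (Derive_ext_loc _ _ _ Hloc). lra. }

  have Hdt : dt u y s <= B.
  { have D := Derive_correct _ _ HCt.
    have := H1L (fun t => u y t) s _ (- B) 0 (s - T1) D ltac:(lra).
    intros H. cut (- B <= - dt u y s); [lra|]. apply H.
    intros r Hr.
    have Hb : inBox a b T1 t0 y (s - r) by (split; [exact Hyb|lra]).
    have := Hmin _ _ Hb. unfold F. rewrite phi_time. intros; nra. }
  have Hlap : N * (- 2 * B) <= lap u y s.
  { rewrite /N -sum_const /lap. apply sum_le => i. exact (proj2 (Hcoord i)). }
  have Hgrad : ka / 2 <= gradnorm u y s.
  { rewrite /gradnorm.
    have H1 : (pd ord_max u y s) ^ 2 <= \big[Rplus/0]_(i < m.+1) (pd i u y s) ^ 2.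
    { apply (sum_ge_one _ (fun i => (pd i u y s) ^ 2)). intros; apply pow2_ge_0. }
    have [E1 _] := Hcoord ord_max. rewrite eqxx in E1. fold xm in E1.
    have H2 : pd ord_max u y s <= - (ka / 2) by nra.
    have H3 : (ka / 2) ^ 2 <= (pd ord_max u y s) ^ 2 by nra.
    rewrite -(sqrt_pow2 (ka / 2)); [|lra].
    apply sqrt_le_1_alt. lra. }
  have Hrp : P <= rpow (gradnorm u y s) p.
  { unfold rpow. destruct (Rlt_dec 0 (gradnorm u y s)) as [Hg|Hg]; [|lra].
    apply Rle_Rpower_l; lra. }
  have := Hpde y s HyQ. nra.
Qed.



Theorem proposition5p5 (n : nat) (hn : (1 <= n)%nat) (p : R) (hp : 1 < p < 2)
  (u : ('I_n -> R) -> R -> R) (hu : ancient_solution p u)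
  (hinf : forall eps, 0 < eps -> forall eta, 0 < eta ->
     exists R0, forall Rr, R0 <= Rr ->
       exists m : R,
         is_glb_Rbar (fun y => exists (x : 'I_n -> R) (t : R),
                         0 < lastc x < Rr /\ t <= - eps /\ y = u x t) (Finite m)
         /\ Rabs m <= eta * Rr) :
  forall (x : 'I_n -> R) (t : R), inQ x t -> 0 <= u x t.
Proof.
destruct n as [|m]; [by []|].
intros x t hx.
destruct (Rle_or_lt 0 (u x t)) as [|Hneg]; [assumption|exfalso].
have hx0 : 0 < x ord_max := proj1 hx.
set ka := - u x t / (2 * x ord_max).
have hk : 0 < ka by (unfold ka; apply Rdiv_lt_0_compat; lra).
have H := main_bound m p hp u hu hinf x t hx ka hk.
have E : ka * x ord_max = - u x t / 2 by (unfold ka; field; lra).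
nra.
Qed.
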